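(* Let $a_1,a_2\ge0$ and $D=D_{a_1,a_2}$. (a) For every horizontal grading $S_1:D_1\to\mathbb{Z}_{\ge0}$ there exist subsets $R\subset Sh\subset D_2$ such that: (i) a vertical grading $S_2:D_2\to\mathbb{Z}_{\ge0}$ forms a compatible pair with $S_1$ if and only if $S_2(v)=0$ for all $v\in Sh\setminus R$ and, for each $h\in\operatorname{supp}(S_1)$ and $v\in R$, at least one of the conditions (HGC), (VGC) holds for $h,v$; (ii) $|Sh|=\min(a_2,|S_1|)$. (b) For every vertical grading $S_2:D_2\to\mathbb{Z}_{\ge0}$ there exist subsets $R\subset Sh\subset D_1$ such that: (i) a horizontal grading $S_1:D_1\to\mathbb{Z}_{\ge0}$ forms a compatible pair with $S_2$ if and only if $S_1(h)=0$ for all $h\in Sh\setminus R$ and, for each $h\in R$ and $v\in\operatorname{supp}(S_2)$, at least one of the conditions (HGC), (VGC) holds for $h,v$; (ii) $|Sh|=\min(a_1,|S_2|)$.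
   Context: Maximal Dyck path: $D=D_{a_1,a_2}$ is the lattice path of unit East and North steps from $(0,0)$ to $(a_1,a_2)$ staying weakly below the diagonal of $[0,a_1]\times[0,a_2]$ and closest to it. $D_1$ and $D_2$ are its sets of horizontal and vertical edges. Identify $(0,0)\equiv(a_1,a_2)$ so $D$ is a cyclic sequence of edges; for edges $e,e'$, $ee'$ is the subpath from $e$ to $e'$ inclusive following $D$ cyclically (wrapping through $(0,0)$ if necessary), $ee$ is $e$ alone, and $(ee')_1,(ee')_2$ are its horizontal and vertical edges. For gradings $S_1:D_1\to\mathbb{Z}_{\ge0}$, $S_2:D_2\to\mathbb{Z}_{\ge0}$, $h\in D_1$, $v\in D_2$: condition (HGC) holds for $h,v$ if there is an edge $e$ with $he$ a proper subpath of $hv$ and $|(he)_2|=\sum_{h'\in(he)_1}S_1(h')$; condition (VGC) holds if there is an edge $e$ with $ev$ a proper subpath of $hv$ and $|(ev)_1|=\sum_{v'\in(ev)_2}S_2(v')$. $(S_1,S_2)$ is a compatible pair if for every $h\in D_1$, $v\in D_2$ at least one of (HGC), (VGC) holds. $|S_i|$ is the sum of the values of $S_i$; $\operatorname{supp}$ denotes the set of edges with nonzero value. *)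

(* Defs.v *)
From mathcomp Require Import all_boot.
Set Implicit Arguments. Unset Strict Implicit. Unset Printing Implicit Defensive.

(* The maximal Dyck path D_{a1,a2} as a word of steps: true = East (horizontal),
   false = North (vertical).  Edges are indexed by 'I_(a1+a2) in path order, starting at (0,0). *)
Definition dyck_word (a1 a2 : nat) : seq bool :=
  if a1 == 0 then nseq a2 false
  else flatten [seq true :: nseq (i * a2 %/ a1 - i.-1 * a2 %/ a1) false | i <- iota 1 a1].

Definition is_horiz (a1 a2 : nat) (e : 'I_(a1 + a2)) : bool := nth false (dyck_word a1 a2) e.

Definition D1 (a1 a2 : nat) : {set 'I_(a1 + a2)} := [set e | is_horiz e].
Definition D2 (a1 a2 : nat) : {set 'I_(a1 + a2)} := [set e | ~~ is_horiz e].

(* cyclic distance from e to f along D (with (0,0) identified with (a1,a2)) *)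
Definition cdist (n : nat) (e f : 'I_n) : nat := (f + n - e) %% n.

Definition subpath (n : nat) (e e' : 'I_n) : {set 'I_n} :=
  [set f | cdist e f <= cdist e e'].

Definition hgrading (a1 a2 : nat) (S1 : 'I_(a1 + a2) -> nat) : Prop :=
  forall e, e \notin D1 a1 a2 -> S1 e = 0.
Definition vgrading (a1 a2 : nat) (S2 : 'I_(a1 + a2) -> nat) : Prop :=
  forall e, e \notin D2 a1 a2 -> S2 e = 0.

Definition HGC (a1 a2 : nat) (S1 : 'I_(a1 + a2) -> nat) (h v : 'I_(a1 + a2)) : Prop :=
  exists e, subpath h e \proper subpath h v /\
    #|subpath h e :&: D2 a1 a2| = \sum_(h' in subpath h e :&: D1 a1 a2) S1 h'.

Definition VGC (a1 a2 : nat) (S2 : 'I_(a1 + a2) -> nat) (h v : 'I_(a1 + a2)) : Prop :=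
  exists e, subpath e v \proper subpath h v /\
    #|subpath e v :&: D1 a1 a2| = \sum_(v' in subpath e v :&: D2 a1 a2) S2 v'.

Definition compatible (a1 a2 : nat) (S1 S2 : 'I_(a1 + a2) -> nat) : Prop :=
  forall h v, h \in D1 a1 a2 -> v \in D2 a1 a2 -> HGC S1 h v \/ VGC S2 h v.

Definition gsum (a1 a2 : nat) (A : {set 'I_(a1 + a2)}) (S : 'I_(a1 + a2) -> nat) : nat :=
  \sum_(e in A) S e.

(* Main.v *)
Require Import Defs.
From mathcomp Require Import all_boot zify.
From Stdlib Require Import Classical.
Set Implicit Arguments. Unset Strict Implicit. Unset Printing Implicit Defensive.


Lemma modn2 x n : x < n + n -> (x < n /\ x %% n = x) \/ (n <= x /\ x %% n = x - n).
Proof.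
move=> H; case: (ltnP x n) => Hx; first by left; rewrite modn_small.
right; split=> //.
have -> : x = (x - n) + n by lia.
rewrite modnDr modn_small; lia.
Qed.

Lemma ord_pos n (v : 'I_n) : 0 < n.
Proof. exact: (leq_ltn_trans (leq0n v) (ltn_ord v)). Qed.

Definition back n (v : 'I_n) (j : nat) : 'I_n := Ordinal (ltn_pmod (v + n - j) (ord_pos v)).
Definition fwd n (h : 'I_n) (i : nat) : 'I_n := Ordinal (ltn_pmod (h + i) (ord_pos h)).
Definition cdo n (h x : 'I_n) : 'I_n := Ordinal (ltn_pmod (x + n - h) (ord_pos h)).

Lemma cdistE n (e f : 'I_n) : cdist e f = (if e <= f then f - e else f + n - e).
Proof.
rewrite /cdist; have := ltn_ord e; have := ltn_ord f => hf he.
case: (modn2 (x:=f + n - e) (n:=n) ltac:(lia)) => [] [H1 ->]; case: ifP; lia.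
Qed.

Lemma backE n (v : 'I_n) j : j <= n -> nat_of_ord (back v j) = (if j <= v then v - j else v + n - j).
Proof.
move=> hj; rewrite /=; have := ltn_ord v => hv.
case: (modn2 (x:=v + n - j) (n:=n) ltac:(lia)) => [] [H1 ->]; case: ifP; lia.
Qed.

Lemma fwdE n (h : 'I_n) i : i <= n -> nat_of_ord (fwd h i) = (if h + i < n then h + i else h + i - n).
Proof.
move=> hj; rewrite /=; have := ltn_ord h => hv.
case: (modn2 (x:=h + i) (n:=n) ltac:(lia)) => [] [H1 ->]; case: ifP; lia.
Qed.


Definition PS n (P : pred 'I_n) (v : 'I_n) k := \sum_(0 <= j < k) (P (back v j.+1) : nat).
Definition TS n (tok : 'I_n -> nat) (v : 'I_n) k := \sum_(0 <= j < k) tok (back v j.+1).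
Definition BadB n (P : pred 'I_n) (tok : 'I_n -> nat) : {set 'I_n} :=
  [set v | P v && [exists k : 'I_n, (0 < k) && (PS P v k < TS tok v k)]].

Lemma back_shift n (v v' : 'I_n) m j : back v' m = v -> m + j <= n -> m <= n -> back v' (m + j) = back v j.
Proof.
move=> E hmj hm; apply: ord_inj; have := ltn_ord v; have := ltn_ord v' => h1 h2.
have e1 := backE v' hm; rewrite E in e1.
rewrite backE // backE; last by lia.
move: e1; case: ifP; case: ifP; case: ifP; lia.
Qed.

Lemma key n (P : pred (ordinal n)) (tok : ordinal n -> nat) (v v' : 'I_n) (k k' m : nat) :
  (forall x, P x -> tok x = 0) -> P v ->
  (forall j, j < k' -> TS tok v' j <= PS P v' j) ->
  back v' m = v -> 0 < m -> m + k = k' -> k' < n -> PS P v k < TS tok v k ->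
  TS tok v' k' - PS P v' k' < TS tok v k - PS P v k.
Proof.
move=> t0 Pv min E m0 mk kn lt.
have split F : \sum_(0 <= j < k') F (back v' j.+1) =
   \sum_(0 <= j < m) F (back v' j.+1) + \sum_(0 <= j < k) F (back v j.+1).
  rewrite (big_cat_nat (n:=m)) //=; last by lia.
  congr (_ + _); rewrite -{1}(add0n m) big_addn.
  have -> : k' - m = k by lia.
  rewrite big_seq_cond [RHS]big_seq_cond; apply: eq_bigr => i; rewrite mem_index_iota andbT => hi; have -> : (i + m).+1 = m + i.+1 by lia.
  rewrite (back_shift (v:=v)) //; lia.
have hm : TS tok v' m < PS P v' m.
  have hm1 := min m.-1 ltac:(lia).
  move: hm1; rewrite /TS /PS; have -> : m = m.-1.+1 by lia.
  rewrite !big_nat_recr //= prednK // E.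
  by rewrite Pv t0 //= addn0; lia.
move: hm; rewrite /TS /PS in lt *; rewrite (split tok) (split (fun x => nat_of_bool (P x))); lia.
Qed.

Lemma back_meet n (v v' : 'I_n) k k' : v != v' -> k < n -> k' < n -> back v k = back v' k' ->
  (exists m, [/\ back v' m = v, 0 < m & m + k = k']) \/
  (exists m, [/\ back v m = v', 0 < m & m + k' = k]).
Proof.
move=> ne hk hk' E.
have hv := ltn_ord v; have hv' := ltn_ord v'.
have nv : (v:nat) <> v' by move=> h; move/eqP: ne; apply; apply: ord_inj.
have := congr1 (@nat_of_ord n) E; rewrite !backE; try lia. move=> e.
pose m1 := if v <= v' then v' - v else v' + n - v.
pose m2 := if v' <= v then v - v' else v + n - v'.
have b1 : back v' m1 = v.
  apply: ord_inj; rewrite backE /m1; last by repeat case: ifP; lia.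
  by repeat case: ifP; lia.
have b2 : back v m2 = v'.
  apply: ord_inj; rewrite backE /m2; last by repeat case: ifP; lia.
  by repeat case: ifP; lia.
case: (boolP (m1 + k == k')) => c.
  by left; exists m1; split => //; [rewrite /m1; repeat case: ifP; lia | apply/eqP].
right; exists m2; split => //; move: c e; rewrite /m1 /m2; repeat case: ifP; lia.
Qed.

Lemma sum_lt M t : t <= M -> \sum_(j < M) (j < t : nat) = t.
Proof.
move=> tM; rewrite -(big_mkord (fun _ => true) (fun j => (j < t : nat))) (big_cat_nat (n:=t)) //=.
rewrite [X in _ + X]big_nat_cond [X in _ + X]big1 ?addn0; last first.
  by move=> i /andP[/andP[h1 _] _]; rewrite ltnNge h1.
rewrite big_nat_cond (eq_bigr (fun _ => 1)); last by move=> i /andP[/andP[_ ->] _].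
by rewrite -big_nat_cond sum_nat_const_nat subn0 muln1.
Qed.

Lemma card_tokset n M (tok : 'I_n -> nat) : (forall x, tok x <= M) ->
  #|[set p : 'I_n * 'I_M | p.2 < tok p.1]| = \sum_x tok x.
Proof.
move=> hM; rewrite -sum1_card.
have -> : \sum_(p in [set p : 'I_n * 'I_M | p.2 < tok p.1]) 1 =
   \sum_(p : 'I_n * 'I_M) (p.2 < tok p.1 : nat).
  by rewrite big_mkcond; apply: eq_bigr => p _; rewrite inE; case: ltnP.
rewrite -(pair_bigA _ (fun i (j : 'I_M) => (j < tok i : nat))) /=.
by apply: eq_bigr => i _; rewrite sum_lt.
Qed.

Lemma count_bad n (P : pred 'I_n) (tok : 'I_n -> nat) :
  (forall x, P x -> tok x = 0) -> #|BadB P tok| <= \sum_x tok x.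
Proof.
move=> t0.
set tot := \sum_x tok x.
have tokle x : tok x <= tot by rewrite /tot (bigD1 x) //= leq_addr.
pose p (v : 'I_n) := fun k => (0 < k) && (PS P v k < TS tok v k).
pose kv v := find (p v) (iota 0 n).
pose rv v := TS tok v (kv v) - PS P v (kv v).
pose phi v : 'I_n * 'I_tot.+1 := (back v (kv v), inord (rv v).-1).
have F1 v : v \in BadB P tok -> [/\ P v, 0 < kv v, kv v < n, PS P v (kv v) < TS tok v (kv v)
     & forall j, j < kv v -> TS tok v j <= PS P v j].
  rewrite inE => /andP[Pv /existsP[k hk]].
  have hs : has (p v) (iota 0 n) by apply/hasP; exists (val k) => //; rewrite mem_iota /=.
  have := nth_find 0 hs; rewrite -/(kv v); move: (hs); rewrite has_find size_iota -/(kv v) => klt.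
  rewrite nth_iota // add0n => /andP[k0 klt2]; split=> // j jlt.
  have := before_find 0 jlt; rewrite nth_iota; last by lia.
  rewrite add0n; case: (posnP j) => [->|j0]; first by rewrite /TS /PS !big_geq.
  by move=> b; move: b; rewrite /p j0 /= => /negbT; rewrite -leqNgt.
have F3 v : v \in BadB P tok -> 0 < rv v <= tok (back v (kv v)).
  move=> /F1 [Pv k0 kn lt mn]; have := mn (kv v).-1 ltac:(lia).
  move: lt; rewrite /rv /TS /PS; set K := (kv v).-1.
  have e : kv v = K.+1 by rewrite /K; lia.
  rewrite e !big_nat_recr //=; lia.
have inj : {in BadB P tok &, injective phi}.
  move=> v v' vB v'B E.
  have eh : back v (kv v) = back v' (kv v') := congr1 fst E.
  have er : inord (rv v).-1 = inord (rv v').-1 :> 'I_tot.+1 := congr1 snd E.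
  have r0 := F3 v vB; have r0' := F3 v' v'B.
  have er2 : rv v = rv v'.
    move: er => /(congr1 (@nat_of_ord _)); rewrite !inordK; try lia.
    + by have := tokle (back v' (kv v')); lia.
    + by have := tokle (back v (kv v)); lia.
  apply/eqP; apply/negP => /negP ne.
  have [Pv k0 kn lt mn] := F1 v vB; have [Pv' k0' kn' lt' mn'] := F1 v' v'B.
  case: (back_meet ne kn kn' eh) => [[m [bm m0 mk]]|[m [bm m0 mk]]].
    have := key t0 Pv mn' bm m0 mk kn' lt; rewrite /rv in er2; lia.
  have := key t0 Pv' mn bm m0 mk kn lt'; rewrite /rv in er2; lia.
rewrite -(card_in_imset inj).
apply: (leq_trans (n := #|[set p : 'I_n * 'I_tot.+1 | p.2 < tok p.1]|)).
  apply: subset_leq_card; apply/subsetP => x /imsetP[v vB ->]; rewrite inE /phi /=.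
  move: (F3 v vB) (tokle (back v (kv v))) => h1 h2; rewrite inordK; lia.
by rewrite card_tokset // => x; apply: leqW.
Qed.

Definition PSf n (P : pred 'I_n) (h : 'I_n) k := \sum_(0 <= j < k) (P (fwd h j.+1) : nat).
Definition TSf n (tok : 'I_n -> nat) (h : 'I_n) k := \sum_(0 <= j < k) tok (fwd h j.+1).
Definition BadF n (P : pred 'I_n) (tok : 'I_n -> nat) : {set 'I_n} :=
  [set h | P h && [exists k : 'I_n, (0 < k) && (PSf P h k < TSf tok h k)]].

Lemma rev_back n (h : 'I_n) j : j <= n -> rev_ord (back (rev_ord h) j) = fwd h j.
Proof.
move=> jn; apply: ord_inj; rewrite fwdE //.
have := ltn_ord h => hh.
have e := backE (rev_ord h) jn; rewrite /= in e.
have hb := ltn_ord (back (rev_ord h) j).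
move: e hb; rewrite /=; repeat case: ifP; lia.
Qed.

Lemma count_badF n (P : pred 'I_n) (tok : 'I_n -> nat) :
  (forall x, P x -> tok x = 0) -> #|BadF P tok| <= \sum_x tok x.
Proof.
move=> t0.
pose P' := fun x => P (rev_ord x). pose tok' := fun x => tok (rev_ord x).
have t0' x : P' x -> tok' x = 0 by apply: t0.
have sub : BadF P tok \subset (@rev_ord n) @: BadB P' tok'.
  apply/subsetP => h; rewrite inE => /andP[Ph /existsP[k /andP[k0 hk]]].
  apply/imsetP; exists (rev_ord h); last by rewrite rev_ordK.
  rewrite inE /P' rev_ordK Ph /=; apply/existsP; exists k; rewrite k0 /=.
  have eq F : \sum_(0 <= j < k) F (rev_ord (back (rev_ord h) j.+1)) = \sum_(0 <= j < k) F (fwd h j.+1).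
    rewrite big_seq_cond [RHS]big_seq_cond; apply: eq_bigr => i.
    rewrite mem_index_iota andbT => hi; rewrite rev_back //.
    have := ltn_ord k; lia.
  move: hk; rewrite /PS /TS /PSf /TSf /P' /tok'.
  by rewrite (eq tok) (eq (fun x => nat_of_bool (P x))).
apply: (leq_trans (subset_leq_card sub)); apply: (leq_trans (leq_imset_card _ _)).
apply: (leq_trans (count_bad t0')).
by rewrite [X in _ <= X](reindex_inj rev_ord_inj).
Qed.


Lemma card_nth n (w : seq bool) : size w = n ->
  #|[set i : 'I_n | nth false w i]| = count id w.
Proof.
move=> sw; rewrite -sum1_card -sum1_count -{2}(mkseq_nth false w) sw /mkseq big_map.
have -> : iota 0 n = index_iota 0 n by rewrite /index_iota subn0.
rewrite big_mkord.
by apply: eq_bigl => i; rewrite inE.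
Qed.

Lemma dyck_props a1 a2 : size (dyck_word a1 a2) = a1 + a2 /\ count id (dyck_word a1 a2) = a1.
Proof.
rewrite /dyck_word; case: eqP => [->|/eqP a0].
  by rewrite size_nseq count_nseq.
set g := fun i => i * a2 %/ a1 - i.-1 * a2 %/ a1.
have mono i : i.-1 * a2 %/ a1 <= i * a2 %/ a1 by apply: leq_div2r; apply: leq_mul => //; exact: leq_pred.
suff : forall m, sumn (shape [seq true :: nseq (g i) false | i <- iota 1 m]) = m + m * a2 %/ a1 /\
   count id (flatten [seq true :: nseq (g i) false | i <- iota 1 m]) = m.
  move=> /(_ a1) [h1 h2]; rewrite size_flatten h1 h2 mulKn //; lia.
elim=> [|m [IH1 IH2]]; first by rewrite /= div0n.
rewrite -[m.+1]addn1 iotaD !map_cat flatten_cat count_cat /shape map_cat sumn_cat -/(shape _) IH1 IH2 /=.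
rewrite cats0 count_nseq size_nseq /= mul0n; split; last by lia.
have := mono (1 + m); rewrite /g /= add1n /= => hm.
rewrite addn1; lia.
Qed.

Lemma cardDD1 a1 a2 : #|D1 a1 a2| = a1.
Proof.
have [h1 h2] := dyck_props a1 a2.
by rewrite /D1 /is_horiz card_nth.
Qed.

Lemma cardDD2 a1 a2 : #|D2 a1 a2| = a2.
Proof.
have e : D2 a1 a2 = ~: D1 a1 a2 by apply/setP => x; rewrite !inE.
have := cardsC (D1 a1 a2); rewrite -e cardDD1 card_ord; lia.
Qed.

Definition cdoB n (v x : 'I_n) : 'I_n := Ordinal (ltn_pmod (v + n - x) (ord_pos v)).

Lemma cdist_fwd n (h : 'I_n) (i : 'I_n) : cdist h (fwd h i) = i.
Proof.
rewrite cdistE fwdE; last exact: ltnW.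
have := ltn_ord h; have := ltn_ord i; repeat case: ifP; lia.
Qed.

Lemma cdist_back n (v : 'I_n) (i : 'I_n) : cdist (back v i) v = i.
Proof.
rewrite cdistE backE; last exact: ltnW.
have := ltn_ord v; have := ltn_ord i; repeat case: ifP; lia.
Qed.

Lemma sum_fwd n (h : 'I_n) d (F : 'I_n -> nat) : d <= n ->
  \sum_(x | cdist h x < d) F x = \sum_(0 <= i < d) F (fwd h i).
Proof.
move=> dn.
have bij : bijective (fun i : 'I_n => fwd h i).
  exists (fun x => cdo h x) => x.
    by apply: ord_inj; rewrite /= -/(cdist h (fwd h x)) cdist_fwd.
  apply: ord_inj; rewrite fwdE /=; last by have := ltn_pmod (x + n - h) (ord_pos h); lia.
  rewrite -/(cdist h x) cdistE; have := ltn_ord h; have := ltn_ord x; repeat case: ifP; lia.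
rewrite (reindex (fun i : 'I_n => fwd h i)) /=; last exact: onW_bij.
rewrite (eq_bigl (fun j : 'I_n => j < d)); last by move=> j; rewrite cdist_fwd.
by rewrite -(big_ord_widen n (fun i => F (fwd h i)) dn) big_mkord.
Qed.

Lemma sum_back n (v : 'I_n) d (F : 'I_n -> nat) : d <= n ->
  \sum_(x | cdist x v < d) F x = \sum_(0 <= i < d) F (back v i).
Proof.
move=> dn.
have bij : bijective (fun i : 'I_n => back v i).
  exists (fun x => cdoB v x) => x.
    by apply: ord_inj; rewrite /= -/(cdist (back v x) v) cdist_back.
  apply: ord_inj; rewrite backE /=; last by have := ltn_pmod (v + n - x) (ord_pos v); lia.
  rewrite -/(cdist x v) cdistE; have := ltn_ord v; have := ltn_ord x; repeat case: ifP; lia.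
rewrite (reindex (fun i : 'I_n => back v i)) /=; last exact: onW_bij.
rewrite (eq_bigl (fun j : 'I_n => j < d)); last by move=> j; rewrite cdist_back.
by rewrite -(big_ord_widen n (fun i => F (back v i)) dn) big_mkord.
Qed.

Lemma ivt (a b : nat -> nat) k : 0 < k -> (forall i, a i <= 1) -> a 0 < b 0 ->
  \sum_(0 <= i < k) b i <= \sum_(0 <= i < k) a i ->
  exists2 i, i < k & \sum_(0 <= j < i.+1) a j = \sum_(0 <= j < i.+1) b j.
Proof.
move=> k0 a1 ab hk.
have ex : exists i, \sum_(0 <= j < i.+1) b j <= \sum_(0 <= j < i.+1) a j.
  by exists k.-1; rewrite prednK.
case: (ex_minnP ex) => i0 hi0 mini.
have i0k : i0 < k.
  have := mini k.-1; rewrite prednK // => /(_ hk); lia.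
have i0p : 0 < i0.
  case: (posnP i0) hi0 => // ->; rewrite big_nat1 big_nat1; lia.
exists i0 => //.
have hp : ~~ (\sum_(0 <= j < i0.-1.+1) b j <= \sum_(0 <= j < i0.-1.+1) a j).
  by apply/negP => /mini; lia.
move: hp hi0; rewrite prednK // !big_nat_recr //=.
have := a1 i0; lia.
Qed.

Lemma card_setI_sum (T : finType) (A B : {set T}) : #|A :&: B| = \sum_(x in A) (x \in B : nat).
Proof.
rewrite -sum1_card big_mkcond [RHS]big_mkcond; apply: eq_bigr => x _.
by rewrite inE; case: (x \in A); case: (x \in B).
Qed.

Lemma sum_setI_zero (T : finType) (A B : {set T}) (f : T -> nat) :
  (forall x, x \notin B -> f x = 0) -> \sum_(x in A :&: B) f x = \sum_(x in A) f x.
Proof.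
move=> hf; rewrite big_mkcond [RHS]big_mkcond; apply: eq_bigr => x _.
rewrite inE; case: (x \in A) => //=; case: (boolP (x \in B)) => // /hf -> //.
Qed.

Lemma subpathE n (e v x : 'I_n) : (x \in subpath e v) = (cdist x v <= cdist e v).
Proof.
rewrite inE !cdistE; have := ltn_ord e; have := ltn_ord v; have := ltn_ord x.
repeat case: ifP; lia.
Qed.

Lemma cdist_lt n (e f : 'I_n) : cdist e f < n.
Proof. exact: ltn_pmod (ord_pos e). Qed.

Lemma HGC_of a1 a2 S1 (h v : 'I_(a1 + a2)) i : hgrading S1 -> i < cdist h v ->
  \sum_(0 <= j < i.+1) ((fwd h j) \in D2 a1 a2 : nat) = \sum_(0 <= j < i.+1) S1 (fwd h j) ->
  HGC S1 h v.
Proof.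
move=> hg hi E.
have iln : i < a1 + a2 by have := cdist_lt h v; lia.
have ce : cdist h (fwd h i) = i by have := cdist_fwd h (Ordinal iln).
exists (fwd h i); split.
  apply/properP; split.
    by apply/subsetP => x; rewrite !inE ce => hx; lia.
  by exists v; rewrite !inE // ce -ltnNge.
rewrite card_setI_sum sum_setI_zero; last by move=> x /hg.
have sp G : \sum_(x in subpath h (fwd h i)) G x = \sum_(x | cdist h x < i.+1) G x.
  by apply: eq_bigl => x; rewrite inE ce ltnS.
by rewrite !sp !sum_fwd.
Qed.

Lemma VGC_of a1 a2 S2 (h v : 'I_(a1 + a2)) i : vgrading S2 -> i < cdist h v ->
  \sum_(0 <= j < i.+1) ((back v j) \in D1 a1 a2 : nat) = \sum_(0 <= j < i.+1) S2 (back v j) ->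
  VGC S2 h v.
Proof.
move=> hg hi E.
have iln : i < a1 + a2 by have := cdist_lt h v; lia.
have ce : cdist (back v i) v = i by have := cdist_back v (Ordinal iln).
exists (back v i); split.
  apply/properP; split.
    by apply/subsetP => x; rewrite !subpathE ce => hx; lia.
  by exists h; rewrite !subpathE // ce -ltnNge.
rewrite card_setI_sum sum_setI_zero; last by move=> x /hg.
have sp G : \sum_(x in subpath (back v i) v) G x = \sum_(x | cdist x v < i.+1) G x.
  by apply: eq_bigl => x; rewrite subpathE ce ltnS.
by rewrite !sp !sum_back.
Qed.

Lemma back_fwd n (h v : 'I_n) j : j <= cdist h v -> back v j = fwd h (cdist h v - j).
Proof.
move=> hj; have := cdist_lt h v => hl.
apply: ord_inj; rewrite backE; last by lia.
rewrite fwdE; last by lia.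
move: hj hl; rewrite cdistE; have := ltn_ord h; have := ltn_ord v; repeat case: ifP; lia.
Qed.

Lemma fwd0 n (h : 'I_n) : fwd h 0 = h.
Proof. by apply: ord_inj; rewrite /= addn0 modn_small. Qed.

Lemma back0 n (v : 'I_n) : back v 0 = v.
Proof. by apply: ord_inj; rewrite /= subn0 modnDr modn_small. Qed.

Lemma D12 a1 a2 (x : 'I_(a1 + a2)) : (x \in D2 a1 a2) = (x \notin D1 a1 a2).
Proof. by rewrite !inE. Qed.

Lemma A1 a1 a2 S1 (h v : 'I_(a1 + a2)) : hgrading S1 -> h \in D1 a1 a2 -> S1 h != 0 ->
  v \in D2 a1 a2 -> ~ HGC S1 h v -> v \in BadB (fun x => x \in D2 a1 a2) S1.
Proof.
move=> hg hD1 hS vD2 nH; case: (boolP (v \in _)) => // nb; exfalso; apply: nH.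
set k := cdist h v.
have kn : k < a1 + a2 by apply: cdist_lt.
have hv : h != v by apply/eqP => e; move: vD2; rewrite D12 -e hD1.
have k0 : 0 < k.
  rewrite /k cdistE; have := ltn_ord h; have := ltn_ord v.
  have : (h : nat) <> v by move=> e; move/eqP: hv; apply; apply: ord_inj.
  repeat case: ifP; lia.
move: nb; rewrite inE vD2 /= => /existsPn /(_ (Ordinal kn)); rewrite /= k0 /= -leqNgt => le.
have conv F : \sum_(0 <= j < k) F (back v j.+1) = \sum_(0 <= i < k) F (fwd h i).
  rewrite [RHS](big_nat_rev _ _ 0 k) /= add0n.
  rewrite big_seq_cond [RHS]big_seq_cond; apply: eq_bigr => i.
  by rewrite mem_index_iota andbT => hi; rewrite (back_fwd (h:=h)).
move: le; rewrite /TS /PS (conv S1) (conv (fun x => nat_of_bool (x \in D2 a1 a2))) => le.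
have [i ik E] := ivt (a := fun i => nat_of_bool (fwd h i \in D2 a1 a2)) (b := fun i => S1 (fwd h i))
  k0 (fun i => leq_b1 _) ltac:(rewrite /= fwd0 D12 hD1 /= lt0n //) le.
exact: (HGC_of hg ik E).
Qed.

Lemma B1 a1 a2 S2 (h v : 'I_(a1 + a2)) : vgrading S2 -> h \in D1 a1 a2 -> v \in D2 a1 a2 ->
  S2 v != 0 -> ~ VGC S2 h v -> h \in BadF (fun x => x \in D1 a1 a2) S2.
Proof.
move=> hg hD1 vD2 hS nV; case: (boolP (h \in _)) => // nb; exfalso; apply: nV.
set k := cdist h v.
have kn : k < a1 + a2 by apply: cdist_lt.
have hv : h != v by apply/eqP => e; move: vD2; rewrite D12 -e hD1.
have k0 : 0 < k.
  rewrite /k cdistE; have := ltn_ord h; have := ltn_ord v.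
  have : (h : nat) <> v by move=> e; move/eqP: hv; apply; apply: ord_inj.
  repeat case: ifP; lia.
move: nb; rewrite inE hD1 /= => /existsPn /(_ (Ordinal kn)); rewrite /= k0 /= -leqNgt => le.
have conv F : \sum_(0 <= j < k) F (fwd h j.+1) = \sum_(0 <= i < k) F (back v i).
  rewrite [RHS](big_nat_rev _ _ 0 k) /= add0n.
  rewrite big_seq_cond [RHS]big_seq_cond; apply: eq_bigr => i.
  rewrite mem_index_iota andbT => hi; rewrite (back_fwd (h:=h)); last by rewrite -/k; lia.
  by rewrite -/k; have -> : k - (k - i.+1) = i.+1 by lia.
move: le; rewrite /TSf /PSf (conv S2) (conv (fun x => nat_of_bool (x \in D1 a1 a2))) => le.
have [i ik E] := ivt (a := fun i => nat_of_bool (back v i \in D1 a1 a2)) (b := fun i => S2 (back v i))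
  k0 (fun i => leq_b1 _) ltac:(rewrite /= back0 -(negbK (v \in D1 a1 a2)) -D12 vD2 /= lt0n //) le.
exact: (VGC_of hg ik E).
Qed.


Lemma extend (T : finType) (A B : {set T}) m : A \subset B -> #|A| <= m <= #|B| ->
  exists C : {set T}, [/\ A \subset C, C \subset B & #|C| = m].
Proof.
move=> sAB /andP[h1 h2].
suff : forall d (A : {set T}), A \subset B -> #|A| + d <= #|B| ->
   exists C : {set T}, [/\ A \subset C, C \subset B & #|C| = #|A| + d].
  move=> /(_ (m - #|A|) A sAB) H; have e : #|A| + (m - #|A|) = m by lia.
  by rewrite e in H; apply: H; lia.
elim=> [|d IH] A' sA hc; first by exists A'; rewrite addn0.
have : ~~ (B \subset A').
  apply/negP => sBA; have := subset_leq_card sBA; lia.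
case/subsetPn => x xB xA.
have sA2 : x |: A' \subset B by rewrite subUset sub1set xB.
have := IH (x |: A') sA2; rewrite cardsU1 xA /= => /(_ ltac:(lia)) [C [s1 s2 s3]].
exists C; split => //; last by rewrite s3; lia.
by apply: subset_trans s1; apply: subsetUr.
Qed.

Lemma cdist_pos a1 a2 (h v : 'I_(a1 + a2)) : h \in D1 a1 a2 -> v \in D2 a1 a2 -> 0 < cdist h v.
Proof.
move=> hD1 vD2.
have hv : h != v by apply/eqP => e; move: vD2; rewrite D12 -e hD1.
rewrite cdistE; have := ltn_ord h; have := ltn_ord v.
have : (h : nat) <> v by move=> e; move/eqP: hv; apply; apply: ord_inj.
repeat case: ifP; lia.
Qed.

Unset Implicit Arguments.

Theorem lemma4p4 (a1 a2 : nat) :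
  (forall S1 : 'I_(a1 + a2) -> nat, hgrading S1 ->
     exists R Sh : {set 'I_(a1 + a2)},
       [/\ R \subset Sh, Sh \subset D2 a1 a2,
           (forall S2 : 'I_(a1 + a2) -> nat, vgrading S2 ->
              (compatible S1 S2 <->
               ((forall v, v \in Sh :\: R -> S2 v = 0) /\
                (forall h v, h \in D1 a1 a2 -> S1 h != 0 -> v \in R ->
                   HGC S1 h v \/ VGC S2 h v))))
         & #|Sh| = minn a2 (gsum (D1 a1 a2) S1)]) /\
  (forall S2 : 'I_(a1 + a2) -> nat, vgrading S2 ->
     exists R Sh : {set 'I_(a1 + a2)},
       [/\ R \subset Sh, Sh \subset D1 a1 a2,
           (forall S1 : 'I_(a1 + a2) -> nat, hgrading S1 ->
              (compatible S1 S2 <->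
               ((forall h, h \in Sh :\: R -> S1 h = 0) /\
                (forall h v, h \in R -> v \in D2 a1 a2 -> S2 v != 0 ->
                   HGC S1 h v \/ VGC S2 h v))))
         & #|Sh| = minn a1 (gsum (D2 a1 a2) S2)]).
Proof.
split.
- move=> S1 hg.
  set Bad := BadB (fun x => x \in D2 a1 a2) S1.
  have sD : Bad \subset D2 a1 a2 by apply/subsetP => x; rewrite inE => /andP[].
  have c1 : #|Bad| <= gsum (D1 a1 a2) S1.
    have -> : gsum (D1 a1 a2) S1 = \sum_x S1 x.
      rewrite /gsum big_mkcond; apply: eq_bigr => x _.
      by case: (boolP (x \in D1 a1 a2)) => // /hg ->.
    by apply: count_bad => x; rewrite D12 => /hg.
  have c2 : #|Bad| <= a2 by apply: (leq_trans (subset_leq_card sD)); rewrite cardDD2.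
  have hm : #|Bad| <= minn a2 (gsum (D1 a1 a2) S1) <= #|D2 a1 a2|.
    by rewrite leq_min c1 c2 /= cardDD2 geq_minl.
  have [C [s1 s2 s3]] := extend sD hm.
  exists C, C; split => // S2 vg; split.
    move=> comp; split; first by move=> v; rewrite setDv inE.
    by move=> h v hD1 _ vC; apply: comp => //; apply: (subsetP s2).
  move=> [_ H] h v hD1 vD2.
  case: (eqVneq (S1 h) 0) => hs.
    left; apply: (HGC_of (i := 0)) hg (cdist_pos hD1 vD2) _.
    by rewrite !big_nat1 fwd0 hs D12 hD1.
  case: (boolP (v \in C)) => vC; first exact: H.
  case: (classic (HGC S1 h v)) => [|nH]; first by left.
  exfalso; have vB := A1 hg hD1 hs vD2 nH.
  by move/negP: vC; apply; apply: (subsetP s1).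
- move=> S2 vg.
  set Bad := BadF (fun x => x \in D1 a1 a2) S2.
  have sD : Bad \subset D1 a1 a2 by apply/subsetP => x; rewrite inE => /andP[].
  have c1 : #|Bad| <= gsum (D2 a1 a2) S2.
    have -> : gsum (D2 a1 a2) S2 = \sum_x S2 x.
      rewrite /gsum big_mkcond; apply: eq_bigr => x _.
      by case: (boolP (x \in D2 a1 a2)) => // /vg ->.
    by apply: count_badF => x xD; apply: vg; rewrite D12 xD.
  have c2 : #|Bad| <= a1 by apply: (leq_trans (subset_leq_card sD)); rewrite cardDD1.
  have hm : #|Bad| <= minn a1 (gsum (D2 a1 a2) S2) <= #|D1 a1 a2|.
    by rewrite leq_min c1 c2 /= cardDD1 geq_minl.
  have [C [s1 s2 s3]] := extend sD hm.
  exists C, C; split => // S1 hg; split.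
    move=> comp; split; first by move=> v; rewrite setDv inE.
    by move=> h v hC vD2 _; apply: comp => //; apply: (subsetP s2).
  move=> [_ H] h v hD1 vD2.
  case: (eqVneq (S2 v) 0) => hs.
    right; apply: (VGC_of (i := 0)) vg (cdist_pos hD1 vD2) _.
    by rewrite !big_nat1 back0 hs -(negbK (v \in D1 a1 a2)) -D12 vD2.
  case: (boolP (h \in C)) => hC; first exact: H.
  case: (classic (VGC S2 h v)) => [|nV]; first by right.
  exfalso; have hB := B1 vg hD1 vD2 hs nV.
  by move/negP: hC; apply; apply: (subsetP s1).
Qed.
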